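(* Let $\Sigma$ be an $(m,n)$-multirate system with operators $A_t,B_t,C_t,D_t$, let $\mathcal A:=\mathcal T_{m\overline n}(A)$, $\mathcal B:=\mathcal T_{m\overline n}(B)$, $\mathcal C:=\mathcal T_{m\overline n}(C)$, $\mathcal D:=\mathcal T_{m\overline n}(D)$, let $0\neq z\in\rho_{m\overline n}(\mathcal A)$, let the input $u$ be a $U$-valued $(n,z^{\overline m})$-EMP and put $\mathbf u:=\mathcal F_{n,z^{\overline m}}u$. \begin{enumerate} \item There is a unique initial state $x_0\in X$ such that the signals $u^\circ$, $x$, $y^\circ$ of the central system of $\Sigma$ with $x(0)=x_0$ are $(m\overline n,z)$-EMPs, and the output $y$ is an $(m,z^{\overline n})$-EMP. \item For this $x_0$, with $\mathbf u^\circ:=\mathcal F_{m\overline n,z}u^\circ$, $\mathbf x:=\mathcal F_{m\overline n,z}x$, $\mathbf y^\circ:=\mathcal F_{m\overline n,z}y^\circ$ and $\mathbf y:=\mathcal F_{m,z^{\overline n}}y$, one has \[ \mathcal N_{m\overline n}\mathbf x=z\mathcal A\mathbf x+z\mathcal B\mathbf u^\circ,\quad \mathbf y^\circ=\mathcal C\mathbf x+\mathcal D\mathbf u^\circ,\quad \mathbf u^\circ=\Pi_{n,1,\overline m}\mathbf u/\overline m,\quad \mathbf y=\Pi_{m,1,\overline n}^*\mathbf y^\circ. \tag{$\ast$} \] Conversely, if $\mathbf u\in U^n$, $\mathbf u^\circ\in U^{m\overline n}$, $\mathbf x\in X^{m\overline n}$, $\mathbf y^\circ\in Y^{m\overline n}$,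 $\mathbf y\in Y^m$ satisfy $(\ast)$, then the corresponding time-domain sequences $u=\mathcal F_{n,z^{\overline m}}^{-1}\mathbf u$, $u^\circ=\mathcal F^{-1}_{m\overline n,z}\mathbf u^\circ$, $x=\mathcal F^{-1}_{m\overline n,z}\mathbf x$, $y^\circ=\mathcal F^{-1}_{m\overline n,z}\mathbf y^\circ$, $y=\mathcal F^{-1}_{m,z^{\overline n}}\mathbf y$ satisfy the equations of $\Sigma$, and $x(0)$ equals the sum of the entries of $\mathbf x$. \item For $z\in\rho_{m\overline n}(\mathcal A)$, $\mathbf u$ uniquely determines $\mathbf u^\circ,\mathbf x,\mathbf y^\circ,\mathbf y$ in $(\ast)$; in particular the map $\mathbf u\mapsto\mathbf y$ equals \[ \mathcal G(z):=\Pi_{m,1,\overline n}^*\big(z\mathcal C(\mathcal N_{m\overline n}-z\mathcal A)^{-1}\mathcal B+\mathcal D\big)\Pi_{n,1,\overline m}/\overline m . \] \end{enumerate}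
   Context: $j$ is the imaginary unit; $U,X,Y$ are separable complex Hilbert spaces. Upsampler: $(\uparrow_q v)_t=v_{t/q}$ if $t/q\in\mathbb Z$, else $0$; downsampler: $(\downarrow_q v)_t=v_{qt}$. Multirate system: for $m,n\in\mathbb Z^+$ let $c=\gcd(m,n)$, $\overline m=m/c$, $\overline n=n/c$. An $(m,n)$-multirate system $\Sigma$ consists of $m\overline n$-periodic sequences of bounded operators $A_t:X\to X$, $B_t:U\to X$, $C_t:X\to Y$, $D_t:U\to Y$ and the equations $x_{t+1}=A_tx_t+B_tu^\circ_t$, $y^\circ_t=C_tx_t+D_tu^\circ_t$, $u^\circ=\uparrow_{\overline m}u$, $y=\downarrow_{\overline n}y^\circ$ (input $u$, state $x$, output $y$); the part with input $u^\circ$ and output $y^\circ$ is the central system. EMPs: a $V$-valued $(T,z)$-EMP ($z\ne0$) is $v_t=z^{-t}\sum_{k=0}^{T-1}\widehat v_ke^{2\pi jtk/T}$, $t\in\mathbb Z$; $\mathcal F_{T,z}v:=(\widehat v_k)_{k=0}^{T-1}$ with $\widehat v_k=\frac1T\sum_{t=0}^{T-1}v_tz^te^{-2\pi jtk/T}$. An EMP is identified with its restriction to any set containing $T$ consecutive integers (e.g. $\mathbb N_0$ or $\{0,\dots,T-1\}$), and $\mathcal F_{T,z}^{-1}$ returns the restriction to $\{0,\dots,T-1\}$. $\Pi_{T,w,q}:V^T\to V^{qT}$, $(\Pi_{T,w,q}v)_{t+kT}=w^{kT}v_t$ ($0\le t<T$, $0\le k<q$), and $\Pi^*_{T,w,q}:V^{qT}\to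 V^T$, $(\Pi^*_{T,w,q}v)_t=\sum_{k=0}^{q-1}\overline w^{kT}v_{t+kT}$. For a $T$-periodic operator sequence $A_t$: $\widehat A_k=\frac1T\sum_{t=0}^{T-1}A_te^{-2\pi jtk/T}$ and the Toeplitz transform $\mathcal T_T(A)$ is the $T\times T$ block operator matrix with entry $\widehat A_{(r-\ell)\bmod T}$ in row $r$, column $\ell$. $\mathcal N_T:=\mathrm{diag}(e^{2\pi jk/T}I)_{k=0}^{T-1}$ (identity of the relevant space). $\rho_T(\mathcal A):=\{z\in\mathbb C:\mathcal N_T-z\mathcal A\text{ has a bounded inverse}\}$. *)

(* Defs.v *)
From HB Require Import structures.
From mathcomp Require Import all_boot all_order all_algebra.
From mathcomp Require Import all_classical all_reals all_analysis.
From mathcomp Require Import complex.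
Set Implicit Arguments. Unset Strict Implicit. Unset Printing Implicit Defensive.
Import Order.TTheory GRing.Theory Num.Theory.
Import numFieldNormedType.Exports.
Local Open Scope ring_scope.

Section MultirateDefs.
Variable R : realType.
Local Notation C := (R[i]).

Definition omega (T : nat) : C :=
  Complex (cos (2 * pi / T%:R)) (sin (2 * pi / T%:R)).

Section Signals.
Variable V : lmodType C.

Definition upsample (q : nat) (v : nat -> V) : nat -> V :=
  fun t => if (q %| t)%N then v (t %/ q)%N else 0.
Definition downsample (q : nat) (v : nat -> V) : nat -> V := fun t => v (q * t)%N.

(* inverse transform: the (T,z)-EMP with coefficients vh, restricted to N_0 *)
Definition Finv (T : nat) (z : C) (vh : 'I_T -> V) : nat -> V :=
  fun t => z ^- t *: \sum_(k < T) (omega T ^+ (t * k)) *: vh k.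

Definition IsEMP (T : nat) (z : C) (v : nat -> V) : Prop :=
  exists vh : 'I_T -> V, forall t, v t = Finv z vh t.

Definition Fourier (T : nat) (z : C) (v : nat -> V) : 'I_T -> V :=
  fun k => (T%:R)^-1 *: \sum_(t < T) (z ^+ t * omega T ^- (t * k)) *: v t.

Definition ext (N : nat) (v : 'I_N -> V) (j : nat) : V :=
  match (insub j : option 'I_N) with Some i => v i | None => 0 end.

(* Pi_{T,w,q} : V^T -> V^{qT}   (N is the target length, N = q*T) *)
Definition Pi (T : nat) (w : C) (q N : nat) (v : 'I_T -> V) : 'I_N -> V :=
  fun i => w ^+ ((i %/ T) * T)%N *: ext v (i %% T)%N.

(* Pi^*_{T,w,q} : V^{qT} -> V^T   (N is the source length, N = q*T) *)
Definition Pistar (T : nat) (w : C) (q N : nat) (v : 'I_N -> V) : 'I_T -> V :=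
  fun t => \sum_(k < q) ((w^*)%C ^+ (k * T)) *: ext v (t + k * T)%N.

Definition Nop (T : nat) (v : 'I_T -> V) : 'I_T -> V :=
  fun k => omega T ^+ k *: v k.

End Signals.
Arguments Pi {V} T w q N v _.
Arguments Pistar {V} T w q N v _.
Arguments Fourier {V} T z v _.

Section Ops.
Variables V W : lmodType C.

Definition opHat (T : nat) (A : nat -> {linear V -> W}) (k : nat) (v : V) : W :=
  (T%:R)^-1 *: \sum_(t < T) (omega T ^- (t * k)) *: A t v.

(* action of the Toeplitz transform T_T(A) on V^T *)
Definition Toep (T : nat) (A : nat -> {linear V -> W}) (x : 'I_T -> V) : 'I_T -> W :=
  fun r => \sum_(l < T) opHat T A ((r + T - l) %% T)%N (x l).

End Ops.

Section Normed.
Variables V W : normedModType C.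

Definition bounded_op (f : V -> W) : Prop :=
  exists M : C, forall v, `|f v| <= M * `|v|.

(* boundedness of an operator on V^T (for the equivalent l^1-type norm) *)
Definition bounded_blk (T : nat) (G : ('I_T -> V) -> ('I_T -> W)) : Prop :=
  exists M : C, forall v, \sum_(k < T) `|G v k| <= M * \sum_(k < T) `|v k|.
End Normed.

Definition rho (V : normedModType C) (T : nat) (Aop : ('I_T -> V) -> ('I_T -> V)) : set C :=
  [set z | exists G : ('I_T -> V) -> ('I_T -> V),
     (forall v, G (fun k => Nop v k - z *: Aop v k) = v) /\
     (forall v, (fun k => Nop (G v) k - z *: Aop (G v) k) = v) /\
     bounded_blk G].

Section System.
Variables (U X Y : lmodType C).
Variables (A : nat -> {linear X -> X}) (B : nat -> {linear U -> X})
          (Cc : nat -> {linear X -> Y}) (D : nat -> {linear U -> Y}).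

Fixpoint traj (uo : nat -> U) (x0 : X) (t : nat) : X :=
  match t with
  | 0 => x0
  | t'.+1 => A t' (traj uo x0 t') + B t' (uo t')
  end.

Definition outo (uo : nat -> U) (x : nat -> X) : nat -> Y :=
  fun t => Cc t (x t) + D t (uo t).

Definition SigmaEqs (mb nb : nat) (u uo : nat -> U) (x : nat -> X)
    (yo y : nat -> Y) : Prop :=
  [/\ forall t, x t.+1 = A t (x t) + B t (uo t),
      forall t, yo t = Cc t (x t) + D t (uo t),
      forall t, uo t = upsample mb u t &
      forall t, y t = downsample nb yo t].

Definition StarEqs (m n mb nb : nat) (z : C)
    (bu : 'I_n -> U) (buo : 'I_(m * nb)%N -> U) (bx : 'I_(m * nb)%N -> X)
    (byo : 'I_(m * nb)%N -> Y) (by_ : 'I_m -> Y) : Prop :=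
  [/\ forall k, Nop bx k = z *: Toep A bx k + z *: Toep B buo k,
      forall k, byo k = Toep Cc bx k + Toep D buo k,
      forall k, buo k = (mb%:R)^-1 *: Pi n 1 mb (m * nb)%N bu k &
      forall k, by_ k = Pistar m 1 nb (m * nb)%N byo k].

End System.

End MultirateDefs.

Arguments Pi {R V} T w q N v _.
Arguments Pistar {R V} T w q N v _.
Arguments Fourier {R V} T z v _.
Arguments StarEqs {R U X Y} A B Cc D m n mb nb z bu buo bx byo by_.

(* Main.v *)
Require Import Defs.
From HB Require Import structures.
From mathcomp Require Import all_boot all_order all_algebra.
From mathcomp Require Import all_classical all_reals all_analysis.
From mathcomp Require Import complex.
From mathcomp Require Import ring lra zify.
Set Implicit Arguments. Unset Strict Implicit. Unset Printing Implicit Defensive.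
Import Order.TTheory GRing.Theory Num.Theory.
Import numFieldNormedType.Exports.
Local Open Scope ring_scope.

Lemma dvd_shift T k l : (k < T)%N -> (l < T)%N -> ((T %| l + T - k) = (l == k))%N.
Proof.
move=> kT lT; case: (ltngtP l k) => h.
  apply: negbTE; apply/negP => H; have x0 : (0 < l + T - k)%N by lia.
  have := dvdn_leq x0 H; lia.
- have -> : (l + T - k = (l - k) + T)%N by lia.
  rewrite dvdn_addl ?dvdnn //; apply: negbTE; apply/negP => H; have x0 : (0 < l - k)%N by lia.
  have := dvdn_leq x0 H; lia.
- by rewrite h addKn dvdnn.
Qed.
Lemma rot_inv P k l : (k < P)%N -> (l < P)%N -> (((k + l) %% P + P - l) %% P = k)%N.
Proof.
move=> kP lP; have P0 : (0 < P)%N by lia.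
have lr : (l <= (k + l) %% P + P)%N by lia.
rewrite -[RHS](modn_small kP); apply/eqP; rewrite -(eqn_modDr l) subnK //.
by rewrite modnDr modn_mod.
Qed.
Lemma rot_inj P k1 k2 l : (k1 < P)%N -> (k2 < P)%N -> ((k1 + l) %% P = (k2 + l) %% P)%N -> k1 = k2.
Proof.
move=> h1 h2 /eqP; rewrite eqn_modDr (modn_small h1) (modn_small h2) => /eqP //.
Qed.

Section Om.
Variable R : realType.
Local Notation C := (R[i]).
Definition th (T : nat) : R := 2 * pi / T%:R.

Lemma omega_exp T j : omega R T ^+ j = Complex (cos (j%:R * th T)) (sin (j%:R * th T)).
Proof.
elim: j => [|j IH]; first by rewrite expr0 !mul0r cos0 sin0.
rewrite exprSr IH /omega -/(th T).
have -> : j.+1%:R * th T = j%:R * th T + th T by rewrite -addn1 natrD mulrDl mul1r.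
rewrite cosD sinD.
apply/eqP; rewrite eq_complex /=; apply/andP; split; apply/eqP; ring.
Qed.

Lemma thT T : (0 < T)%N -> T%:R * th T = pi *+ 2.
Proof. move=> T0; rewrite /th mulr2n; field; by rewrite pnatr_eq0 -lt0n. Qed.

Lemma omegaT T : (0 < T)%N -> omega R T ^+ T = 1.
Proof. by move=> T0; rewrite omega_exp thT // cos2pi sin2pi. Qed.

Lemma omega_neq0 T : omega R T != 0.
Proof.
apply/negP => /eqP H.
have := omega_exp T 1; rewrite expr1 H mul1r => /eqP; rewrite eq_complex /= => /andP[/eqP c0 /eqP s0].
by have := cos2Dsin2 (th T); rewrite -c0 -s0 expr0n /= addr0 => /eqP; rewrite eq_sym oner_eq0.
Qed.

Lemma omega_mod T j : (0 < T)%N -> omega R T ^+ (j %% T) = omega R T ^+ j.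
Proof. by move=> T0; rewrite {2}(divn_eq j T) exprD mulnC exprM omegaT // expr1n mul1r. Qed.

Lemma omega_ne1 T j : (0 < j < T)%N -> omega R T ^+ j != 1.
Proof.
move=> /andP[j0 jT]; have T0 : (0 < T)%N by apply: leq_trans jT.
rewrite omega_exp; apply/negP => /eqP [c1 _].
set a := j%:R * th T in c1.
have ha : a = (a / 2) *+ 2 by rewrite mulr2n; field.
have : sin (a / 2) = 0.
  have := cos_mulr2n (a/2); rewrite -ha c1 => e.
  have : sin (a / 2) ^+ 2 = 0.
    rewrite sin2cos2; apply/eqP; rewrite subr_eq0; apply/eqP.
    have : cos (a / 2) ^+ 2 *+ 2 = 2 by rewrite -[LHS](subrK 1) -e; ring.
    by move=> h; lra.
  by move/eqP; rewrite expf_eq0 /= => /eqP.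
have : 0 < sin (a / 2).
  apply: sin_gt0_pi; apply/andP; split.
    rewrite /a /th; apply: divr_gt0 => //; apply: mulr_gt0; first by rewrite ltr0n.
    by apply: divr_gt0; [apply: mulr_gt0=> //; exact: pi_gt0 | rewrite ltr0n].
  have -> : a / 2 = pi * (j%:R / T%:R) by rewrite /a /th; field; rewrite pnatr_eq0 -lt0n.
  rewrite -[X in _ < X]mulr1 ltr_pM2l ?pi_gt0 // ltr_pdivrMr ?ltr0n // mul1r ltr_nat //.
by move=> h e; rewrite e ltxx in h.
Qed.

Lemma omega_mul q T : (0 < q)%N -> (0 < T)%N -> omega R (q * T) ^+ q = omega R T.
Proof.
move=> q0 T0; rewrite omega_exp -[omega R T]expr1 omega_exp; congr Complex; congr (_ _);
 rewrite /th natrM mul1r; field; rewrite ?pnatr_eq0 -?lt0n ?q0 ?T0 //.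
Qed.

Lemma geo_sum (a : C) T : a ^+ T = 1 -> a != 1 -> \sum_(t < T) a ^+ t = 0.
Proof.
move=> aT a1.
have := subrX1 a T; rewrite aT subrr => /esym /eqP.
by rewrite mulf_eq0 subr_eq0 (negbTE a1) /= => /eqP.
Qed.

Lemma orth T j : (0 < T)%N ->
  \sum_(t < T) omega R T ^+ (t * j) = if (T %| j)%N then T%:R else 0.
Proof.
move=> T0; case: ifP => Tj.
  rewrite (eq_bigr (fun _ => 1)) ?sumr_const ?card_ord //.
  by move=> t _; move: Tj => /dvdnP[k ->]; rewrite [(k * T)%N]mulnC mulnCA exprM omegaT ?expr1n.
rewrite (eq_bigr (fun t : 'I_T => (omega R T ^+ j) ^+ t)); last by move=> t _; rewrite -exprM mulnC.
apply: geo_sum; first by rewrite -exprM mulnC exprM omegaT ?expr1n.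
rewrite -omega_mod //; apply: omega_ne1; rewrite ltn_mod T0 andbT lt0n.

by apply/negP => /eqP h; rewrite /dvdn h eqxx in Tj.
Qed.
End Om.

Section Sig.
Variable R : realType.
Local Notation C := (R[i]).
Local Notation w := (omega R).
Variable V : lmodType C.

Lemma shift T k l t : (k < T)%N -> w T ^- (t * k) * w T ^+ (t * l) = w T ^+ (t*(l + T - k)).
Proof.
move=> kT; have T0 : (0 < T)%N by lia.
apply: (mulIf (expf_neq0 (t * k) (omega_neq0 R T))).
rewrite mulrAC mulVf ?expf_neq0 ?omega_neq0 // mul1r -exprD -mulnDr subnK; last by lia.
by rewrite mulnDr exprD [(t * T)%N]mulnC [w T ^+ (T * t)%N]exprM omegaT // expr1n mulr1.
Qed.

Lemma orth2 T (k l : nat) : (k < T)%N -> (l < T)%N ->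
  \sum_(t < T) w T ^- (t * k) * w T ^+ (t * l) = if l == k then T%:R else 0.
Proof.
move=> kT lT; have T0 : (0 < T)%N by lia.
rewrite (eq_bigr (fun t : 'I_T => w T ^+ (t * (l + T - k)))); last by move=> t _; rewrite shift.
by rewrite orth // dvd_shift.
Qed.

Lemma ext_ord N (v : 'I_N -> V) (k : 'I_N) : ext v k = v k.
Proof. by rewrite /ext valK. Qed.

Lemma Fourier_Finv T z (vh : 'I_T -> V) : (0 < T)%N -> z != 0 ->
  Fourier T z (Finv z vh) = vh.
Proof.
move=> T0 z0; apply/funext => k; rewrite /Fourier.
have E : forall t : 'I_T, (z ^+ t * w T ^- (t * k)) *: Finv z vh t
    = \sum_(l < T) (w T ^- (t * k) * w T ^+ (t * l)) *: vh l.
  move=> t; rewrite /Finv scalerA mulrAC mulfV ?expf_neq0 // mul1r scaler_sumr.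
  by apply: eq_bigr => l _; rewrite scalerA.
rewrite (eq_bigr _ (fun t _ => E t)) exchange_big /=.
rewrite (eq_bigr (fun l : 'I_T => (if l == k then T%:R else 0) *: vh l)); last first.
  by move=> l _; rewrite -scaler_suml orth2.
rewrite (bigD1 k) //= eqxx big1 ?addr0; last by move=> l /negbTE ->; rewrite scale0r.
by rewrite scalerA mulVf ?scale1r // pnatr_eq0 -lt0n.
Qed.

Lemma Finv_inj T z (f g : 'I_T -> V) : (0 < T)%N -> z != 0 ->
  (forall t, Finv z f t = Finv z g t) -> f = g.
Proof.
move=> T0 z0 h; rewrite -(Fourier_Finv f T0 z0) -(Fourier_Finv g T0 z0).
by have -> : Finv z f = Finv z g by apply/funext.
Qed.

Lemma Finv_rec T z (v : 'I_T -> V) t : z != 0 ->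
  Finv z v t.+1 = z^-1 *: Finv z (Nop v) t.
Proof.
move=> z0; rewrite /Finv /Nop scalerA -invfM -exprS; congr (_ *: _).
apply: eq_bigr => k _; rewrite scalerA -exprD mulSn addnC.
by [].
Qed.

Lemma FinvD T z (f g : 'I_T -> V) t :
  Finv z (fun k => f k + g k) t = Finv z f t + Finv z g t.
Proof. by rewrite /Finv -scalerDr -big_split /=; congr (_ *: _); apply: eq_bigr => k _; rewrite scalerDr. Qed.

Lemma FinvZ T z a (f : 'I_T -> V) t :
  Finv z (fun k => a *: f k) t = a *: Finv z f t.
Proof.
rewrite /Finv scalerA [a * _]mulrC -scalerA; congr (_ *: _); rewrite scaler_sumr.
by apply: eq_bigr => k _; rewrite !scalerA mulrC.
Qed.

Lemma Finv0 T z (f : 'I_T -> V) : Finv z f 0 = \sum_(k < T) f k.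
Proof. by rewrite /Finv expr0 invr1 scale1r; apply: eq_bigr => k _; rewrite mul0n expr0 scale1r. Qed.

Lemma Finv_ext T z (f g : 'I_T -> V) t : f =1 g -> Finv z f t = Finv z g t.
Proof. by move=> h; rewrite /Finv; congr (_ *: _); apply: eq_bigr => k _; rewrite h. Qed.

End Sig.

Lemma per_mod (T : Type) (f : nat -> T) P t : (forall t, f (t + P)%N = f t) -> f (t %% P)%N = f t.
Proof.
move=> h; rewrite {2}(divn_eq t P); elim: (t %/ P)%N => [|q IH]; first by rewrite mul0n add0n.
by rewrite mulSn -addnA addnC h.
Qed.

Section Op.
Variable R : realType.
Local Notation C := (R[i]).
Local Notation w := (omega R).
Variables V W : lmodType C.

Lemma opHatZ P (A : nat -> {linear V -> W}) k a v : opHat P A k (a *: v) = a *: opHat P A k v.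
Proof.
rewrite /opHat scalerA [a * _]mulrC -scalerA; congr (_ *: _); rewrite scaler_sumr.
by apply: eq_bigr => s _; rewrite linearZ /= !scalerA mulrC.
Qed.

Lemma ToepZ P (A : nat -> {linear V -> W}) (x : 'I_P -> V) a r :
  Toep A (fun k => a *: x k) r = a *: Toep A x r.
Proof. by rewrite /Toep scaler_sumr; apply: eq_bigr => l _; rewrite opHatZ. Qed.

Lemma opHat_series P (A : nat -> {linear V -> W}) t v : (0 < P)%N ->
  (forall t, A (t + P)%N = A t) ->
  A t v = \sum_(k < P) w P ^+ (t * k) *: opHat P A k v.
Proof.
move=> P0 hA; have tP : (t %% P < P)%N by rewrite ltn_mod.
pose r := Ordinal tP.
have E : forall k : 'I_P, w P ^+ (t * k) *: opHat P A k v =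
   P%:R^-1 *: \sum_(s < P) (w P ^- (k * s) * w P ^+ (k * r)) *: A s v.
  move=> k; rewrite /opHat scalerA [_ * P%:R^-1]mulrC -scalerA scaler_sumr; congr (_ *: _).
  apply: eq_bigr => s _; rewrite scalerA; congr (_ *: _).
  have -> : w P ^+ (t * k) = w P ^+ (k * r) by rewrite /= [(k * _)%N]mulnC !exprM omega_mod.
  by rewrite mulrC [(s * k)%N]mulnC.
rewrite (eq_bigr _ (fun k _ => E k)) -scaler_sumr exchange_big /=.
rewrite (eq_bigr (fun s : 'I_P => (if (r : nat) == s then P%:R else 0) *: A s v)); last first.
  by move=> s _; rewrite -scaler_suml orth2.
rewrite (bigD1 r) //= eqxx big1 ?addr0; last first.
  move=> s sr; case: eqP => [e|_]; last by rewrite scale0r.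
  have e' : s = r by apply: ord_inj; rewrite -e.
  by move: sr; rewrite e' eqxx.
rewrite scalerA mulVf ?scale1r ?pnatr_eq0 -?lt0n //.
by rewrite /r /= (@per_mod _ A P t hA).
Qed.

Lemma Toep_Finv P (A : nat -> {linear V -> W}) (x : 'I_P -> V) z t : (0 < P)%N ->
  (forall t, A (t + P)%N = A t) ->
  A t (Finv z x t) = Finv z (Toep A x) t.
Proof.
move=> P0 hA; rewrite /Finv linearZ /= linear_sum /=; congr (_ *: _).
rewrite /Toep.
rewrite [RHS](eq_bigr (fun r : 'I_P => \sum_(l < P) w P ^+ (t * r) *: opHat P A ((r + P - l) %% P) (x l)));
  last by move=> r _; rewrite scaler_sumr.
rewrite exchange_big /=; apply: eq_bigr => l _.
rewrite linearZ /= (opHat_series _ _ P0 hA) scaler_sumr.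
have hl : forall k : 'I_P, ((k + l) %% P < P)%N by move=> k; rewrite ltn_mod.
pose h := fun k : 'I_P => Ordinal (hl k).
have hinj : injective h.
  by move=> k1 k2 /(congr1 val) /= e; apply: ord_inj; apply: (rot_inj (ltn_ord k1) (ltn_ord k2) e).
rewrite [RHS](reindex_inj hinj) /=; apply: eq_bigr => k _.
have -> : w P ^+ (t * ((k + l) %% P)) = w P ^+ (t * (l + k)).
  by rewrite mulnC exprM omega_mod // -exprM mulnC addnC.
by rewrite rot_inv // scalerA -exprD -mulnDr.
Qed.

End Op.

Section UpDown.
Variable R : realType.
Local Notation C := (R[i]).
Local Notation w := (omega R).
Variable V : lmodType C.

Lemma sum_split (F : nat -> V) a b :
  \sum_(0 <= i < a * b) F i = \sum_(j < a) \sum_(k < b) F (j * b + k)%N.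
Proof.
elim: a => [|a IH]; first by rewrite mul0n big_geq // big_ord0.
rewrite big_ord_recr /= -IH mulSn addnC (@big_cat_nat _ _ _ (a * b)) //=; last by rewrite leq_addr.
congr (_ + _); rewrite -{1}[(a * b)%N]add0n big_addn addKn big_mkord.
by apply: eq_bigr => k _; rewrite addnC.
Qed.

Lemma omega_mul' q T : (0 < q)%N -> (0 < T)%N -> w (q * T) ^+ T = w q.
Proof. by move=> q0 T0; rewrite mulnC omega_mul. Qed.

Lemma Finv_up q T N z (v : 'I_T -> V) t : (0 < q)%N -> (0 < T)%N -> N = (q * T)%N -> z != 0 ->
  Finv z (fun k : 'I_N => q%:R^-1 *: Pi T 1 q N v k) t = upsample q (Finv (z ^+ q) v) t.
Proof.
move=> q0 T0 eN z0; subst N; rewrite /Finv /Pi /upsample.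
under eq_bigr => k _ do rewrite expr1n scale1r.
rewrite -(big_mkord xpredT (fun k => w (q * T) ^+ (t * k) *: (q%:R^-1 *: ext v (k %% T)))).
rewrite sum_split.
have E : forall (j : 'I_q) (k : 'I_T), w (q * T) ^+ (t * (j * T + k)) *: (q%:R^-1 *: ext v ((j * T + k) %% T))
   = w q ^+ (j * t) *: (q%:R^-1 *: (w (q * T) ^+ (t * k) *: v k)).
  move=> j k; rewrite modnMDl modn_small // ext_ord mulnDr exprD -scalerA.
  rewrite (_ : (t * (j * T) = T * (j * t))%N); last by lia.
  by rewrite exprM omega_mul' //; congr (_ *: _); rewrite !scalerA mulrC.
under eq_bigr => j _ do under eq_bigr => k _ do rewrite E.
rewrite exchange_big /=.
under eq_bigr => k _ do rewrite -scaler_suml orth //.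
case: (boolP (q %| t)%N) => qt.
  move: (qt) => /dvdnP[s ->]; rewrite mulnK //.
  rewrite -exprM mulnC; congr (_ *: _); apply: eq_bigr => k _.
  rewrite scalerA mulfV ?pnatr_eq0 -?lt0n // scale1r.
  by rewrite -mulnA exprM omega_mul.
by rewrite big1 ?scaler0 // => k _; rewrite scale0r.
Qed.

Lemma Finv_down T q N z (y : 'I_N -> V) s : (0 < T)%N -> (0 < q)%N -> N = (T * q)%N -> z != 0 ->
  Finv (z ^+ q) (Pistar T 1 q N y) s = Finv z y (q * s).
Proof.
move=> T0 q0 eN z0; subst N; rewrite /Finv /Pistar conjc1 -exprM; congr (_ *: _).
under eq_bigr => t _ do under eq_bigr => k _ do rewrite expr1n scale1r.
pose G := fun i => w (T * q) ^+ (q * s * i) *: ext y i.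
have -> : \sum_(i < T * q) w (T * q) ^+ (q * s * i) *: y i = \sum_(0 <= i < T * q) G i.
  by rewrite big_mkord; apply: eq_bigr => i _; rewrite /G ext_ord.
have := sum_split G q T; rewrite [(q * T)%N]mulnC => ->.
rewrite exchange_big /=; apply: eq_bigr => t _; rewrite scaler_sumr; apply: eq_bigr => k _.
rewrite /G [(k * T + t)%N]addnC; congr (_ *: _).
rewrite -mulnA [w (T * q) ^+ _]exprM [(T * q)%N]mulnC omega_mul // mulnDr exprD.
rewrite (_ : (s * (k * T) = T * (s * k))%N); last by lia.
by rewrite [w T ^+ (T * _)]exprM omegaT // expr1n mulr1.
Qed.

End UpDown.
Unset Implicit Arguments.
Set Strict Implicit.

Theorem theorem7 (R : realType) (U X Y : normedModType R[i]) (m n : nat)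
  (A : nat -> {linear X -> X}) (B : nat -> {linear U -> X})
  (Cc : nat -> {linear X -> Y}) (D : nat -> {linear U -> Y})
  (z : R[i]) (u : nat -> U) :
  (0 < m)%N -> (0 < n)%N ->
  let c := gcdn m n in
  let mb := (m %/ c)%N in
  let nb := (n %/ c)%N in
  let P := (m * nb)%N in
  (forall t, A (t + P)%N = A t) -> (forall t, B (t + P)%N = B t) ->
  (forall t, Cc (t + P)%N = Cc t) -> (forall t, D (t + P)%N = D t) ->
  (forall t, bounded_op (A t)) -> (forall t, bounded_op (B t)) ->
  (forall t, bounded_op (Cc t)) -> (forall t, bounded_op (D t)) ->
  z != 0 ->
  rho (fun v : 'I_P -> X => Toep A v) z ->
  IsEMP n (z ^+ mb) u ->
  let uo := upsample mb u in
  let x_ := fun x0 : X => traj A B uo x0 in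
  let yo_ := fun x0 : X => outo Cc D uo (x_ x0) in
  let y_ := fun x0 : X => downsample nb (yo_ x0) in
  let good := fun x0 : X =>
    [/\ IsEMP P z uo, IsEMP P z (x_ x0), IsEMP P z (yo_ x0)
      & IsEMP m (z ^+ nb) (y_ x0)] in
  let bu := Fourier n (z ^+ mb) u in
  (* part 1 *)
  (exists! x0 : X, good x0) /\
  (* part 2, direct *)
  (forall x0 : X, good x0 ->
     StarEqs A B Cc D m n mb nb z bu (Fourier P z uo) (Fourier P z (x_ x0))
       (Fourier P z (yo_ x0)) (Fourier m (z ^+ nb) (y_ x0))) /\
  (* part 2, converse *)
  (forall (bu' : 'I_n -> U) (buo : 'I_P -> U) (bx : 'I_P -> X)
          (byo : 'I_P -> Y) (by_ : 'I_m -> Y),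
     StarEqs A B Cc D m n mb nb z bu' buo bx byo by_ ->
     SigmaEqs A B Cc D mb nb (Finv (z ^+ mb) bu') (Finv z buo) (Finv z bx)
       (Finv z byo) (Finv (z ^+ nb) by_)
     /\ Finv z bx 0 = \sum_(k < P) bx k) /\
  (* part 3: unique determination *)
  (forall bu' : 'I_n -> U,
     exists! s : ('I_P -> U) * ('I_P -> X) * ('I_P -> Y) * ('I_m -> Y),
       StarEqs A B Cc D m n mb nb z bu' s.1.1.1 s.1.1.2 s.1.2 s.2) /\
  (* part 3: the map bu |-> by is G(z) *)
  (forall Rinv : ('I_P -> X) -> ('I_P -> X),
     (forall v, Rinv (fun k => Nop v k - z *: Toep A v k) = v) ->
     (forall v, (fun k => Nop (Rinv v) k - z *: Toep A (Rinv v) k) = v) ->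
     forall (bu' : 'I_n -> U) (buo : 'I_P -> U) (bx : 'I_P -> X)
            (byo : 'I_P -> Y) (by_ : 'I_m -> Y),
     StarEqs A B Cc D m n mb nb z bu' buo bx byo by_ ->
     let w := fun k : 'I_P => (mb%:R)^-1 *: Pi n 1 mb P bu' k in
     by_ = Pistar m 1 nb P
             (fun k => z *: Toep Cc (Rinv (Toep B w)) k + Toep D w k)).
Proof.
move=> m0 n0 c mb nb P hA hB hC hD _ _ _ _ z0 hrho hu uo x_ yo_ y_ good bu.
have c0 : (0 < c)%N by rewrite gcdn_gt0 m0.
have mb0 : (0 < mb)%N by rewrite divn_gt0 // dvdn_leq // dvdn_gcdl.
have nb0 : (0 < nb)%N by rewrite divn_gt0 // dvdn_leq // dvdn_gcdr.
have P0 : (0 < P)%N by rewrite muln_gt0 m0 nb0.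
have ePmb : P = (mb * n)%N.
  by rewrite /P /mb /nb muln_divA ?dvdn_gcdr // divn_mulAC // dvdn_gcdl.
have zmb0 : z ^+ mb != 0 by rewrite expf_neq0.
have znb0 : z ^+ nb != 0 by rewrite expf_neq0.
case: hu => vu hu'.
have eu : u = Finv (z ^+ mb) vu := funext hu'.
have ebu : bu = vu by rewrite /bu eu Fourier_Finv.
move: hrho; rewrite /rho /= => -[G [GL [GR _]]].
have conv : forall (bu' : 'I_n -> U) (buo : 'I_P -> U) (bx : 'I_P -> X)
          (byo : 'I_P -> Y) (by_ : 'I_m -> Y),
     StarEqs A B Cc D m n mb nb z bu' buo bx byo by_ ->
     SigmaEqs A B Cc D mb nb (Finv (z ^+ mb) bu') (Finv z buo) (Finv z bx)
       (Finv z byo) (Finv (z ^+ nb) by_)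
     /\ Finv z bx 0 = \sum_(k < P) bx k.
  move=> bu' buo bx byo by_ [h1 h2 h3 h4]; split; last exact: Finv0.
  split => t.
  - rewrite Finv_rec // (Finv_ext z t h1) FinvD !FinvZ -scalerDr scalerA mulVf // scale1r.
    by rewrite -!Toep_Finv.
  - by rewrite (Finv_ext z t h2) FinvD -!Toep_Finv.
  - by rewrite (Finv_ext z t h3) (Finv_up (N:=P)).
  - by rewrite /downsample (Finv_ext _ t h4) Finv_down.
have star3 : forall bu' : 'I_n -> U,
     exists! s : ('I_P -> U) * ('I_P -> X) * ('I_P -> Y) * ('I_m -> Y),
       StarEqs A B Cc D m n mb nb z bu' s.1.1.1 s.1.1.2 s.1.2 s.2.
  move=> bu'.
  pose w' := fun k : 'I_P => mb%:R^-1 *: Pi n 1 mb P bu' k.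
  pose bx := G (fun k => z *: Toep B w' k).
  pose byo := fun k => Toep Cc bx k + Toep D w' k.
  exists (w', bx, byo, Pistar m 1 nb P byo); split.
    split => k //=.
    have e : Nop bx k - z *: Toep A bx k = z *: Toep B w' k := congr1 (fun f => f k) (GR _).
    by rewrite -e addrC subrK.
  move=> [[[buo' bx'] byo'] by'] /= [h1 h2 h3 h4].
  have ebuo : buo' = w' by apply/funext => k; rewrite h3.
  have ebx : bx' = bx.
    rewrite /bx -(GL bx'); congr (G _); apply/funext => k /=.
    by rewrite h1 ebuo addrAC subrr add0r.
  have ebyo : byo' = byo by apply/funext => k; rewrite h2 ebx ebuo.
  have eby : by' = Pistar m 1 nb P byo by apply/funext => k; rewrite h4 ebyo.
  by rewrite ebuo ebx ebyo eby.
have direct : forall x0 : X, good x0 ->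
     StarEqs A B Cc D m n mb nb z bu (Fourier P z uo) (Fourier P z (x_ x0))
       (Fourier P z (yo_ x0)) (Fourier m (z ^+ nb) (y_ x0)).
  move=> x0 [[vuo huo] [vx hx] [vyo hyo] [vy hy]].
  have euo : uo = Finv z vuo := funext huo.
  have ex : x_ x0 = Finv z vx := funext hx.
  have eyo : yo_ x0 = Finv z vyo := funext hyo.
  have ey : y_ x0 = Finv (z ^+ nb) vy := funext hy.
  rewrite ebu euo ex eyo ey !Fourier_Finv //.
  split => k.
  - have e : Nop vx = (fun k => z *: Toep A vx k + z *: Toep B vuo k).
      apply: (Finv_inj P0 z0) => t.
      have e1 : Finv z (Nop vx) t = z *: Finv z vx t.+1 by rewrite Finv_rec // scalerA mulfV // scale1r.
      rewrite e1 FinvD !FinvZ -scalerDr -!Toep_Finv // -!hx -!huo.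
      by [].
    exact: (congr1 (fun f => f k) e).
  - have e : vyo = (fun k => Toep Cc vx k + Toep D vuo k).
      apply: (Finv_inj P0 z0) => t.
      rewrite FinvD -!Toep_Finv // -!hyo -!hx -!huo.
      by [].
    exact: (congr1 (fun f => f k) e).
  - have e : vuo = (fun k => mb%:R^-1 *: Pi n 1 mb P vu k).
      apply: (Finv_inj P0 z0) => t.
      rewrite -huo (Finv_up (N:=P)) // -eu.
      by [].
    exact: (congr1 (fun f => f k) e).
  - have e : vy = Pistar m 1 nb P vyo.
      apply: (Finv_inj m0 znb0) => t.
      rewrite Finv_down // -hy -hyo.
      by [].
    exact: (congr1 (fun f => f k) e).
have uniq_good : forall x0 x1, good x0 -> good x1 -> x0 = x1.
  move=> x0 x1 g0 g1.
  have d0 := direct x0 g0; have d1 := direct x1 g1.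
  have [s [_ us]] := star3 bu.
  have e0 := us (Fourier P z uo, Fourier P z (x_ x0), Fourier P z (yo_ x0), Fourier m (z ^+ nb) (y_ x0)) d0.
  have e1 := us (Fourier P z uo, Fourier P z (x_ x1), Fourier P z (yo_ x1), Fourier m (z ^+ nb) (y_ x1)) d1.
  have := congr1 (fun s => s.1.1.2) (etrans (esym e0) e1) => /= eF.
  case: g0 => _ [vx0 hx0] _ _; case: g1 => _ [vx1 hx1] _ _.
  have ex0 : x_ x0 = Finv z vx0 := funext hx0.
  have ex1 : x_ x1 = Finv z vx1 := funext hx1.
  rewrite ex0 ex1 !Fourier_Finv // in eF.
  have -> : x0 = x_ x0 0 by [].
  have -> : x1 = x_ x1 0 by [].
  by rewrite hx0 hx1 eF.
split.
  have [[[[buo bx] byo] by_] [hs _]] := star3 bu.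
  have [[s1 s2 s3 s4] _] := conv _ _ _ _ _ hs.
  set x0 := Finv z bx 0.
  have euo' : forall t, uo t = Finv z buo t by move=> t; rewrite s3 ebu -eu.
  have ex' : forall t, x_ x0 t = Finv z bx t.
    elim => [|t IH] //; rewrite s1 -IH -euo'.
    by [].
  have eyo' : forall t, yo_ x0 t = Finv z byo t.
    by move=> t; rewrite s2 -ex' -euo'.
  have ey' : forall t, y_ x0 t = Finv (z ^+ nb) by_ t.
    by move=> t; rewrite s4 /downsample -eyo'.
  have gx : good x0 by split; [exists buo | exists bx | exists byo | exists by_].
  by exists x0; split => // x1 g1; apply: uniq_good.
split; first exact: direct.
split; first exact: conv.
split; first exact: star3.
move=> Rinv RL RR bu' buo bx byo by_ [h1 h2 h3 h4].
pose w0 := fun k : 'I_P => mb%:R^-1 *: Pi n 1 mb P bu' k.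
have ebuo : buo = w0 by apply/funext => k; rewrite h3.
have Lz : forall f, Rinv (fun k => z *: f k) = (fun k => z *: Rinv f k).
  move=> f; pose g := fun k => z *: Rinv f k.
  have e : (fun k => z *: f k) = (fun k => Nop g k - z *: Toep A g k).
    apply/funext => k; rewrite -(congr1 (fun h => h k) (RR f)) /= /g ToepZ /Nop.
    rewrite scalerBr; congr (_ - _); by rewrite !scalerA mulrC.
  by rewrite e RL.
have ebx : bx = Rinv (fun k => z *: Toep B w0 k).
  rewrite -(RL bx); congr Rinv; apply/funext => k /=.
  by rewrite h1 ebuo addrAC subrr add0r.
rewrite Lz in ebx.
have ebyo : byo = (fun k => z *: Toep Cc (Rinv (Toep B w0)) k + Toep D w0 k).
  by apply/funext => k; rewrite h2 ebx ToepZ ebuo.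
by apply/funext => k; rewrite h4 ebyo.
Qed.
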